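(* Let $\mathcal{P}\subset\mathbb{R}^d$ be finite, $r>0$, and let $\eta$ be a singular $k$-cycle in $\mathcal{U}(\mathcal{P},r)$ with filling radius $R_{fill}(\eta)=R$. Then $\eta_{death}\le R+r$.
   Context: $\mathcal{U}(\mathcal{P},r)=\bigcup_{p\in\mathcal{P}}B_r(p)$ (closed Euclidean balls); for a set $X$ (e.g. the image of a chain), $\mathcal{U}(X,\rho)$ denotes its closed $\rho$-neighborhood. Homology has coefficients in $\mathbb{Z}/2\mathbb{Z}$. A filling of a compactly supported singular $k$-cycle $\eta$ is a singular $(k+1)$-chain $\Gamma$ in $\mathbb{R}^d$ with $\partial\Gamma=\eta$; the filling radius is $R_{fill}(\eta)=\inf\{\rho>0:\exists\,\Gamma\text{ with }\partial\Gamma=\eta\text{ and }\Gamma\subset\mathcal{U}(\eta,\rho)\}$ (chains identified with the union of images of their simplices). The death time $\eta_{death}$ is, in the filtration $\{\mathcal{U}(\mathcal{P},s)\}_{s\ge0}$, the smallest $s\ge r$ at which the class of (the image of) $\eta$ becomes trivial in $H_k(\mathcal{U}(\mathcal{P},s))$. *)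

(* Defs.v *)
From Stdlib Require List.
From HB Require Import structures.
From mathcomp Require Import all_boot all_order all_algebra.
From mathcomp Require Import all_classical all_reals all_analysis.
Set Implicit Arguments. Unset Strict Implicit. Unset Printing Implicit Defensive.
Import Order.TTheory GRing.Theory Num.Theory.
Import numFieldNormedType.Exports.
Local Open Scope ring_scope.
Local Open Scope classical_set_scope.

Section Singular.
Variables (R : realType) (d : nat).

Definition enorm (x : 'rV[R]_d) : R := Num.sqrt (\sum_(i < d) x ord0 i ^+ 2).

Definition cball (p : 'rV[R]_d) (r : R) : set 'rV[R]_d :=
  [set x | enorm (x - p) <= r].

Definition Ucov (P : seq 'rV[R]_d) (r : R) : set 'rV[R]_d :=
  \bigcup_(p in [set` P]) cball p r.

Definition cnbhd (X : set 'rV[R]_d) (rho : R) : set 'rV[R]_d :=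
  [set x | exists2 y, X y & enorm (x - y) <= rho].

Definition stdsimplex (n : nat) (t : 'rV[R]_n.+1) : bool :=
  [forall i, 0 <= t ord0 i] && (\sum_i t ord0 i == 1).

(* singular n-simplex: a map Delta^n -> R^d, normalized to be 0 off Delta^n *)
Definition sing_simplex (n : nat) := 'rV[R]_n.+1 -> 'rV[R]_d.

Definition is_sing_simplex n (s : sing_simplex n) : Prop :=
  {within [set t | stdsimplex t], continuous s} /\
  (forall t, ~~ stdsimplex t -> s t = 0).

(* Z/2 chains as formal sums (lists); coefficient = parity of multiplicity *)
Definition chain (n : nat) := seq (sing_simplex n).

Definition is_chain n (c : chain n) : Prop :=
  forall s, List.In s c -> is_sing_simplex s.

Definition coef n (c : chain n) (s : sing_simplex n) : bool :=
  odd (count (fun t => `[< t = s >]) c).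

Definition chain_eq n (c1 c2 : chain n) : Prop :=
  forall s, coef c1 s = coef c2 s.

Definition coface n (i : 'I_n.+2) (t : 'rV[R]_n.+1) : 'rV[R]_n.+2 :=
  \row_j (if unlift i j is Some j' then t ord0 j' else 0).

Definition face n (s : sing_simplex n.+1) (i : 'I_n.+2) : sing_simplex n :=
  fun t => if stdsimplex t then s (coface i t) else 0.

Definition boundary n (c : chain n.+1) : chain n :=
  flatten [seq [seq face s i | i <- enum 'I_n.+2] | s <- c].

Definition is_cycle (n : nat) : chain n -> Prop :=
  match n as m return chain m -> Prop with
  | 0 => fun _ => True
  | m.+1 => fun c => chain_eq (boundary c) [::]
  end.

Definition chain_image n (c : chain n) : set 'rV[R]_d :=
  [set x | exists s, coef c s /\ exists2 t, stdsimplex t & x = s t].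

Definition is_filling n (eta : chain n) (G : chain n.+1) : Prop :=
  is_chain G /\ chain_eq (boundary G) eta.

Definition filling_radius n (eta : chain n) : \bar R :=
  ereal_inf [set rho%:E | rho in
    [set rho : R | 0 < rho /\
       exists G, is_filling eta G /\ chain_image G `<=` cnbhd (chain_image eta) rho]].

(* smallest s >= r at which the class of eta dies in H_n(U(P,s)) *)
Definition death_time n (P : seq 'rV[R]_d) (r : R) (eta : chain n) : \bar R :=
  ereal_inf [set s%:E | s in
    [set s : R | r <= s /\ exists G, is_filling eta G /\ chain_image G `<=` Ucov P s]].

End Singular.

(* Main.v *)
Require Import Defs.
From HB Require Import structures.
From mathcomp Require Import all_boot all_order all_algebra.
From mathcomp Require Import all_classical all_reals all_analysis.
From mathcomp Require Import lra ring.
Import Order.TTheory GRing.Theory Num.Theory.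
Import numFieldNormedType.Exports.
Local Open Scope ring_scope.
Local Open Scope classical_set_scope.

Lemma cs_sum (R : realType) (n : nat) (a b : 'I_n -> R) :
  \sum_i a i * b i <= Num.sqrt (\sum_i a i ^+ 2) * Num.sqrt (\sum_i b i ^+ 2).
Proof.
set A := \sum_i a i ^+ 2; set B := \sum_i b i ^+ 2.
have A0 : 0 <= A by apply: sumr_ge0 => i _; exact: sqr_ge0.
have B0 : 0 <= B by apply: sumr_ge0 => i _; exact: sqr_ge0.
set u := Num.sqrt A; set v := Num.sqrt B.
have u0 : 0 <= u by exact: sqrtr_ge0.
have v0 : 0 <= v by exact: sqrtr_ge0.
have uu : u ^+ 2 = A by exact: sqr_sqrtr.
have vv : v ^+ 2 = B by exact: sqr_sqrtr.
have key : 0 <= \sum_i (a i * v - b i * u) ^+ 2 by apply: sumr_ge0 => i _; exact: sqr_ge0.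
have E : \sum_i (a i * v - b i * u) ^+ 2 = v^+2 * A - 2 * u * v * (\sum_i a i * b i) + u ^+2 * B.
  rewrite /A /B !mulr_sumr -sumrN -!big_split /=.
  by apply: eq_bigr => i _; ring.
rewrite E uu vv in key.
have [uv0|] := ltP 0 (u * v).
  have : 0 <= 2 * (u * v) * (u * v - \sum_i a i * b i) by rewrite -[X in 0 <= X]subr0; move: key; nra.
  rewrite pmulr_rge0 ?subr_ge0 //; lra.
move=> uvle; have uv : u * v = 0 by have := mulr_ge0 u0 v0; lra.
rewrite uv.
have /orP[/eqP u00|/eqP v00] : (u == 0) || (v == 0) by rewrite -mulf_eq0 uv.
  have A00 : A = 0 by rewrite -uu u00 expr0n.
  have ha := psumr_eq0P (fun i _ => sqr_ge0 (a i)) A00.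
  by rewrite big1 // => i _; move/eqP: (ha i isT); rewrite sqrf_eq0 => /eqP ->; rewrite mul0r.
have B00 : B = 0 by rewrite -vv v00 expr0n.
have hb := psumr_eq0P (fun i _ => sqr_ge0 (b i)) B00.
by rewrite big1 // => i _; move/eqP: (hb i isT); rewrite sqrf_eq0 => /eqP ->; rewrite mulr0.
Qed.

Lemma enorm_triangle (R : realType) (d : nat) (x y : 'rV[R]_d) :
  enorm (x + y) <= enorm x + enorm y.
Proof.
rewrite /enorm.
set u := Num.sqrt (\sum_i x ord0 i ^+ 2); set v := Num.sqrt (\sum_i y ord0 i ^+ 2).
have u0 : 0 <= u by exact: sqrtr_ge0.
have v0 : 0 <= v by exact: sqrtr_ge0.
have -> : u + v = Num.sqrt ((u + v) ^+ 2) by rewrite sqrtr_sqr ger0_norm ?addr_ge0.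
rewrite ler_sqrt ?sqr_ge0 //.
have cs := @cs_sum _ _ (fun i => x ord0 i) (fun i => y ord0 i).
have -> : \sum_(i < d) (x + y) ord0 i ^+ 2 =
   \sum_i x ord0 i ^+ 2 + 2 * \sum_i x ord0 i * y ord0 i + \sum_i y ord0 i ^+ 2.
  rewrite mulr_sumr -!big_split /=; apply: eq_bigr => i _; rewrite mxE; ring.
rewrite -/u -/v in cs.
rewrite -[\sum_i x ord0 i ^+ 2](@sqr_sqrtr _ (\sum_i x ord0 i ^+ 2)) ?sumr_ge0 // => [|i _]; last exact: sqr_ge0.
rewrite -[\sum_i y ord0 i ^+ 2](@sqr_sqrtr _ (\sum_i y ord0 i ^+ 2)) ?sumr_ge0 // => [|i _]; last exact: sqr_ge0.
rewrite -/u -/v; nra.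
Qed.

Theorem lemma6p6 (R : realType) (d k : nat) (P : seq 'rV[R]_d) (r Rf : R)
  (eta : chain R d k) :
  0 < r -> is_chain eta -> is_cycle eta ->
  chain_image eta `<=` Ucov P r ->
  filling_radius eta = Rf%:E ->
  (death_time P r eta <= (Rf + r)%:E)%E.
Proof.
move=> r0 _ _ Hsub FR.
apply/lee_addgt0Pr => e e0.
have : (filling_radius eta < (Rf + e)%:E)%E by rewrite FR lte_fin; lra.
move/ereal_inf_lt => [_ [rho [rho0 [G [HG Himg]]] <-]] rholt.
rewrite lte_fin in rholt.
rewrite -EFinD; apply: (@le_trans _ _ ((r + rho)%:E)%E); last by rewrite lee_fin; lra.
apply: ereal_inf_lbound.
exists (r + rho) => //.
split; first lra.
exists G; split => //.
move=> x /Himg [y /Hsub [p Pp Hyp] Hxy].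
exists p => //.
rewrite /cball /=.
have -> : x - p = (x - y) + (y - p) by rewrite addrA subrK.
have T := @enorm_triangle _ _ (x - y) (y - p).
move: Hyp; rewrite /cball /= => Hyp.
lra.
Qed.
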